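(* Let $G$ be a graph on $\Pi$ and $A$ the simple closed-above model generated by $G$. Let $i\in[1,n]$. If the $i$-th covering numbers sequence $(s^i_j)_{j\ge1}$ of $G$ satisfies $s^i_j=n$ for some $j$, then $i$-set agreement is solvable on $A$ (in finitely many rounds).
   Context: Fix $\Pi=\{p_1,\dots,p_n\}$. A graph is a directed graph on $\Pi$ containing all self-loops; $Out_G(p)=\{q:(p,q)\in E(G)\}$, $In_G(p)=\{q:(q,p)\in E(G)\}$, $Out_G(P)=\bigcup_{p\in P}Out_G(p)$. Computation proceeds in failure-free, communication-closed rounds: in round $r$ a graph $G_r$ is chosen and each $p$ receives the round-$r$ messages of the processes in $In_{G_r}(p)$. $\uparrow G=\{H:E(H)\supseteq E(G)\}$; the simple closed-above model generated by $G$ allows exactly the executions whose round graphs all lie in $\uparrow G$. In $k$-set agreement each process starts with an input from a totally ordered set $V_{in}$ and must decide a value so that every decided value is some process's input and at most $k$ distinct values are decided; it is solvable on a model if some algorithm guarantees this, with all processes deciding after some fixed finite number of rounds, in every allowed execution and input assignment. $\mathrm{eqdom}(G)=\min\{i\in[1,n]:\forall P\subseteq\Pi,\ |P|=i\Rightarrow Out_G(P)=\Pi\}$ and $\mathrm{cov}_i(G)=\min_{P\subseteq\Pi,|P|=i}|Out_G(P)|$. The $i$-th covering numbers sequence of $G$ is defined by $s^i_1=\mathrm{cov}_i(G)$ and, for $k\ge1$, $s^i_{k+1}=n$ if $s^i_k\ge\mathrm{eqdom}(G)$, and $s^i_{k+1}=\mathrm{cov}_{s^i_k}(G)$ if $s^i_k<\mathrm{eqdom}(G)$.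 *)

(* Defs.v *)
From HB Require Import structures.
From mathcomp Require Import all_boot all_order.
Set Implicit Arguments. Unset Strict Implicit. Unset Printing Implicit Defensive.

(* Processes Pi = 'I_n.  A (communication) graph is an edge set on 'I_n. *)
Definition graph_on (n : nat) := {set 'I_n * 'I_n}.

Definition is_graph n (G : graph_on n) : Prop := forall p : 'I_n, (p, p) \in G.

Definition Out n (G : graph_on n) (p : 'I_n) : {set 'I_n} := [set q | (p, q) \in G].
Definition In_ n (G : graph_on n) (p : 'I_n) : {set 'I_n} := [set q | (q, p) \in G].
Definition OutS n (G : graph_on n) (P : {set 'I_n}) : {set 'I_n} :=
  \bigcup_(p in P) Out G p.

Definition in_up n (G H : graph_on n) : bool := G \subset H.

Definition eqdom_prop n (G : graph_on n) (i : nat) : bool :=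
  [forall P : {set 'I_n}, (#|P| == i) ==> (OutS G P == setT)].
Definition eqdom n (G : graph_on n) : nat :=
  head n [seq i <- iota 1 n | eqdom_prop G i].

(* cov_i(G) = min_{|P| = i} |Out_G(P)|  (default n, never used for 1<=i<=n) *)
Definition cov n (G : graph_on n) (i : nat) : nat :=
  \big[minn/n]_(P : {set 'I_n} | #|P| == i) #|OutS G P|.

(* covseq G i k = s^i_{k+1}  (0-based index shift):
   s^i_1 = cov_i(G);
   s^i_{k+1} = n if s^i_k >= eqdom(G), and cov_{s^i_k}(G) otherwise. *)
Fixpoint covseq n (G : graph_on n) (i : nat) (k : nat) : nat :=
  match k with
  | 0 => cov G i
  | k'.+1 => let s := covseq G i k' in
             if eqdom G <= s then n else cov G s
  end.

(* Round r (r = 0,1,...) graph G_r: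
   each process p sends msg r p s to all, receives messages of the processes
   in In_{G_r}(p) (None for the others), and updates its state. *)
Record algorithm (n : nat) (V : Type) := Algorithm {
  S : Type;
  M : Type;
  init : 'I_n -> V -> S;
  msg : nat -> 'I_n -> S -> M;
  trans : nat -> 'I_n -> S -> ('I_n -> option M) -> S;
  decide : 'I_n -> S -> V
}.

Fixpoint run n V (A : algorithm n V) (input : 'I_n -> V)
    (exec : nat -> graph_on n) (r : nat) : 'I_n -> @S n V A :=
  match r with
  | 0 => fun p => @init n V A p (input p)
  | r'.+1 => fun p =>
      let st := run A input exec r' in
      @trans n V A r' p (st p)
        (fun q => if (q, p) \in exec r' then Some (@msg n V A r' q (st q)) else None)
  end.

Definition set_agreement_solvable (n k : nat) d (V : orderType d)
    (G : graph_on n) : Prop :=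
  exists (A : algorithm n V) (R : nat),
    forall (input : 'I_n -> V) (exec : nat -> graph_on n),
      (forall r, in_up G (exec r)) ->
      let dec := fun p => @decide n V A p (run A input exec R p) in
      (forall p, exists q, dec p = input q) /\
      size (undup [seq dec p | p <- enum 'I_n]) <= k.

(* Main.v *)
Require Import Defs.
From HB Require Import structures.
From mathcomp Require Import all_boot all_order.

Set Implicit Arguments. Unset Strict Implicit. Unset Printing Implicit Defensive.

Section Alg.
Variables (n : nat) (V : Type).

Definition upd (s : 'I_n * V) (rcv : 'I_n -> option ('I_n * V)) (l : seq 'I_n) :=
  foldr (fun x (acc : 'I_n * V) => if rcv x is Some m then (if (m.1 < acc.1)%N then m else acc) else acc) s l.

Lemma upd_le_s s rcv l : ((upd s rcv l).1 <= s.1)%N.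
Proof.
elim: l => [|x l IH] //=.
case: (rcv x) => [m|] //.
case: ifP => h; last exact: IH.
exact: ltnW (leq_trans h IH).
Qed.

Lemma upd_le_rcv s rcv l x m : x \in l -> rcv x = Some m -> ((upd s rcv l).1 <= m.1)%N.
Proof.
elim: l => [|y l IH] //=.
rewrite in_cons => /orP [/eqP -> -> | xl rx].
  by case: ifP => h //; rewrite leqNgt h.
case: (rcv y) => [m'|]; last exact: IH.
case: ifP => h; last exact: IH.
exact: ltnW (leq_trans h (IH xl rx)).
Qed.

Lemma upd_inv (Q : 'I_n * V -> Prop) s rcv l :
  Q s -> (forall x m, rcv x = Some m -> Q m) -> Q (upd s rcv l).
Proof.
move=> Qs Qr; elim: l => [|x l IH] //=.
case E: (rcv x) => [m|] //.
case: ifP => _ //; exact: Qr E.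
Qed.

Definition alg : algorithm n V :=
  @Algorithm n V ('I_n * V)%type ('I_n * V)%type
    (fun p v => (p, v)) (fun _ _ s => s)
    (fun _ _ s rcv => upd s rcv (enum 'I_n)) (fun _ s => s.2).

End Alg.

Lemma sub_of_card (T : finType) (m : nat) (A : {set T}) :
  m <= #|A| -> exists B : {set T}, B \subset A /\ #|B| = m.
Proof.
elim: m => [|m IH] h.
  by exists set0; rewrite sub0set cards0.
have [B [BA cB]] := IH (ltnW h).
have : B \proper A by rewrite properEcard BA cB.
case/properP => _ [x xA xB].
exists (x |: B); split.
  by rewrite subUset sub1set xA BA.
by rewrite cardsU1 xB cB.
Qed.

Lemma OutS_mono n (G : graph_on n) (A B : {set 'I_n}) :
  A \subset B -> OutS G A \subset OutS G B.
Proof.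
move=> AB; apply/subsetP => q /bigcupP [p pA qp].
apply/bigcupP; exists p => //; exact: (subsetP AB).
Qed.

Lemma eqdom_ok n (G : graph_on n) : is_graph G -> eqdom_prop G (eqdom G).
Proof.
move=> gG; rewrite /eqdom.
case E: [seq i <- iota 1 n | eqdom_prop G i] => [|a l] /=.
  apply/forallP => P; apply/implyP => /eqP cP.
  have PT : P = setT.
    by apply/eqP; rewrite eqEcard subsetT /= cP -[X in _ <= X]card_ord; apply: max_card.
  rewrite PT.
  rewrite eqEsubset subsetT /=; apply/subsetP => q _; apply/bigcupP; exists q; first by rewrite inE.
  by rewrite inE gG.
have : a \in [seq i <- iota 1 n | eqdom_prop G i] by rewrite E mem_head.
by rewrite mem_filter => /andP [].
Qed.

Lemma bigmin_le_seq (I : eqType) (r : seq I) (C : pred I) (F : I -> nat) x j :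
  j \in r -> C j -> \big[minn/x]_(i <- r | C i) F i <= F j.
Proof.
elim: r => [|y r IH] //; rewrite in_cons big_cons => /orP [/eqP <- Cj | jr Cj].
  by rewrite Cj geq_minl.
case: (C y); last exact: IH.
exact: leq_trans (geq_minr _ _) (IH jr Cj).
Qed.

Lemma cov_le n (G : graph_on n) (P : {set 'I_n}) : cov G #|P| <= #|OutS G P|.
Proof.
by rewrite /cov; apply: bigmin_le_seq; rewrite ?mem_index_enum.
Qed.

Fixpoint Tset n (G : graph_on n) (P : {set 'I_n}) (r : nat) : {set 'I_n} :=
  if r is r'.+1 then OutS G (Tset G P r') else P.

Lemma covseq_T n (G : graph_on n) (P : {set 'I_n}) k :
  is_graph G -> covseq G #|P| k <= #|Tset G P k.+1|.
Proof.
move=> gG; elim: k => [|k IH] /=; first exact: cov_le.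
case: ifP => h.
  have [Q [QT cQ]] := sub_of_card (leq_trans h IH).
  have := eqdom_ok gG => /forallP /(_ Q); rewrite cQ eqxx /= => /eqP OQ.
  have : setT \subset OutS G (OutS G (Tset G P k)).
    by rewrite -OQ; apply: OutS_mono.
  by rewrite subTset => /eqP ->; rewrite cardsT card_ord.
have [Q [QT cQ]] := sub_of_card IH.
rewrite -cQ; apply: leq_trans (cov_le G Q) _.
by apply: subset_leq_card; apply: OutS_mono.
Qed.

Theorem theorem9 (n : nat) (d : Order.disp_t) (V : orderType d)
  (G : graph_on n) (i : nat) :
  is_graph G -> 1 <= i <= n ->
  (exists k, covseq G i k = n) ->
  set_agreement_solvable i V G.
Proof.
move=> gG /andP [i1 iN] [k hk].
exists (alg n V), k.+1 => input exec hexec /=.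
set st := run (alg n V) input exec.
have inv : forall r p, (st r p).2 = input (st r p).1.
  elim=> [|r IH] p //=.
  apply: (upd_inv (Q := fun s : 'I_n * V => s.2 = input s.1)); first exact: IH.
  move=> x m; case: ifP => // _ [<-]; exact: IH.
pose P := [set widen_ord iN j | j in 'I_i].
have cP : #|P| = i.
  rewrite card_imset ?card_ord //.
  by move=> a b h; apply: val_inj; exact: (congr1 val h).
have reach : forall r p, p \in Tset G P r -> (st r p).1 < i.
  elim=> [|r IH] p /=.
    by case/imsetP => j _ ->; rewrite /st /=.
  case/bigcupP => q /IH hq; rewrite inE => qp.
  apply: leq_ltn_trans hq.
  apply: (@upd_le_rcv n V _ _ _ q); first by rewrite mem_enum.
  have : (q, p) \in exec r by apply: (subsetP (hexec r)).
  by move=> ->.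
have allT : Tset G P k.+1 = setT.
  apply/eqP; rewrite eqEcard subsetT cardsT card_ord -{1}hk -cP.
  exact: covseq_T.
have lt : forall p, (st k.+1 p).1 < i.
  by move=> p; apply: reach; rewrite allT inE.
split.
  by move=> p; exists (st k.+1 p).1; rewrite -inv.
pose t := [seq input (widen_ord iN j) | j <- enum 'I_i].
have -> : i = size t by rewrite size_map size_enum_ord.
apply: uniq_leq_size; first exact: undup_uniq.
move=> v; rewrite mem_undup => /mapP [p _ ->].
apply/mapP; exists (Ordinal (lt p)); first by rewrite mem_enum.
by transitivity (st k.+1 p).2 => //; rewrite inv; congr input; apply: val_inj.
Qed.
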